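(* For $\mathbf{u}\in\mathbb{R}^6$ define $\mathbf{w}^{\pm}(\mathbf{u})=\frac12\left(\mathbf{u}\pm\frac{\mathbf{f}(\mathbf{u})}{\alpha(\mathbf{u})}\right)$ with $\alpha(\mathbf{u})=|v_1|+\sqrt{3p_{11}/\rho}$. If $\mathbf{u}\in\mathbb{U}_{\mathrm{ad}}$, then $\mathbf{w}^+(\mathbf{u})\in\mathbb{U}_{\mathrm{ad}}$ and $\mathbf{w}^-(\mathbf{u})\in\mathbb{U}_{\mathrm{ad}}$.
   Context: Ten-Moment equations: conservative variable $\mathbf{u}=(\rho,\rho v_1,\rho v_2,E_{11},E_{12},E_{22})^\top$; pressure tensor components $p_{11}=2E_{11}-\rho v_1^2$, $p_{12}=2E_{12}-\rho v_1v_2$, $p_{22}=2E_{22}-\rho v_2^2$. $\mathbb{U}_{\mathrm{ad}}=\{\mathbf{u}\in\mathbb{R}^6:\rho>0\text{ and }\mathbf{x}^\top\mathbf{p}\mathbf{x}>0\ \forall\mathbf{x}\in\mathbb{R}^2\setminus\{0\}\}$. The $x$-direction flux is $\mathbf{f}(\mathbf{u})=\big(\rho v_1,\ \rho v_1^2+p_{11},\ \rho v_1v_2+p_{12},\ (E_{11}+p_{11})v_1,\ E_{12}v_1+\tfrac12(p_{11}v_2+p_{12}v_1),\ E_{22}v_1+p_{12}v_2\big)^\top$. *)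

(* Defs.v *)
From Stdlib Require Import Reals.
Open Scope R_scope.

(* Conservative variable u = (rho, rho v1, rho v2, E11, E12, E22). *)
Record state := mkState {
  u_rho : R; u_m1 : R; u_m2 : R; u_E11 : R; u_E12 : R; u_E22 : R }.

Definition v1 (u : state) : R := u_m1 u / u_rho u.
Definition v2 (u : state) : R := u_m2 u / u_rho u.
Definition p11 (u : state) : R := 2 * u_E11 u - u_rho u * v1 u ^ 2.
Definition p12 (u : state) : R := 2 * u_E12 u - u_rho u * v1 u * v2 u.
Definition p22 (u : state) : R := 2 * u_E22 u - u_rho u * v2 u ^ 2.

Definition pform (u : state) (x1 x2 : R) : R :=
  p11 u * x1 ^ 2 + 2 * p12 u * x1 * x2 + p22 u * x2 ^ 2.

Definition Uad (u : state) : Prop :=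
  0 < u_rho u /\
  forall x1 x2 : R, (x1 <> 0 \/ x2 <> 0) -> 0 < pform u x1 x2.

Definition flux (u : state) : state :=
  mkState
    (u_rho u * v1 u)
    (u_rho u * v1 u ^ 2 + p11 u)
    (u_rho u * v1 u * v2 u + p12 u)
    ((u_E11 u + p11 u) * v1 u)
    (u_E12 u * v1 u + / 2 * (p11 u * v2 u + p12 u * v1 u))
    (u_E22 u * v1 u + p12 u * v2 u).

Definition alpha (u : state) : R := Rabs (v1 u) + sqrt (3 * p11 u / u_rho u).

Definition wpm (s : R) (u : state) : state :=
  let f := flux u in
  let a := alpha u in
  mkState
    (/ 2 * (u_rho u + s * (u_rho f / a)))
    (/ 2 * (u_m1 u + s * (u_m1 f / a)))
    (/ 2 * (u_m2 u + s * (u_m2 f / a)))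
    (/ 2 * (u_E11 u + s * (u_E11 f / a)))
    (/ 2 * (u_E12 u + s * (u_E12 f / a)))
    (/ 2 * (u_E22 u + s * (u_E22 f / a))).

Definition wplus (u : state) : state := wpm 1 u.
Definition wminus (u : state) : state := wpm (-1) u.

(* Main.v *)
Require Import Defs.
From Stdlib Require Import Reals Lra Psatz.
Open Scope R_scope.

Lemma key (u : state) s x1 x2 :
  u_rho u <> 0 -> alpha u <> 0 -> alpha u + s * v1 u <> 0 ->
  pform (wpm s u) x1 x2 =
  / 2 * ((1 + s / alpha u * v1 u) * pform u x1 x2
   - (s / alpha u) ^ 2 * (p11 u * x1 + p12 u * x2) ^ 2 / (u_rho u * (1 + s / alpha u * v1 u))).
Proof.
  unfold wpm. generalize (alpha u); intros al Hr Hal HD.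
  destruct u as [r m1 m2 E11 E12 E22].
  unfold pform, flux, p11, p12, p22, v1, v2 in *; simpl in *.
  assert (HD' : r * al + s * m1 <> 0).
  { intro H. apply HD. replace (al + s * (m1 / r)) with ((r * al + s * m1)/r) by (field; auto). rewrite H. field; auto. }
  field. split; [auto|split; [auto|]]. rewrite Rmult_comm; auto.
Qed.

Lemma main (u : state) s : s * s = 1 -> Uad u -> Uad (wpm s u).
Proof.
  intros Hs [Hr Hq].
  assert (Ha : 0 < p11 u).
  { specialize (Hq 1 0 (or_introl R1_neq_R0)). unfold pform in Hq. nra. }
  assert (Hac : 0 <= p11 u * p22 u - p12 u ^ 2).
  { assert (Hn : - p11 u <> 0) by (intro; lra); specialize (Hq (p12 u) (- p11 u) (or_intror Hn)). unfold pform in Hq.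
    nra. }
  set (cs := sqrt (3 * p11 u / u_rho u)).
  assert (Hcs2 : cs * cs = 3 * p11 u / u_rho u).
  { apply sqrt_sqrt. apply Rlt_le, Rdiv_lt_0_compat; lra. }
  assert (Hcs : 0 < cs).
  { apply sqrt_lt_R0, Rdiv_lt_0_compat; lra. }
  assert (Hal : alpha u = Rabs (v1 u) + cs) by reflexivity.
  set (e := alpha u + s * v1 u).
  assert (He : cs <= e).
  { unfold e. rewrite Hal.
    assert (Hs' : (s - 1) * (s + 1) = 0) by nra.
    apply Rmult_integral in Hs'.
    destruct Hs' as [H1|H1]; [replace s with 1 by lra | replace s with (-1) by lra];
    unfold Rabs; destruct (Rcase_abs (v1 u)); lra. }
  assert (Halp : 0 < alpha u) by (rewrite Hal; pose proof (Rabs_pos (v1 u)); lra).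
  assert (Her : 3 * p11 u <= e * e * u_rho u).
  { assert (cs * cs <= e * e) by nra.
    rewrite Hcs2 in H. apply (Rmult_le_compat_r (u_rho u)) in H; [|lra].
    replace (3 * p11 u / u_rho u * u_rho u) with (3 * p11 u) in H by (field; lra). lra. }
  split.
  - unfold wpm; simpl.
    replace (u_rho u + s * (u_rho u * v1 u / alpha u)) with (u_rho u * e / alpha u)
      by (unfold e; field; lra).
    apply Rmult_lt_0_compat; [lra|]. apply Rdiv_lt_0_compat; [|lra]. nra.
  - intros x1 x2 Hx. specialize (Hq x1 x2 Hx).
    assert (Hne : e <> 0) by lra.
    rewrite key; [| lra | lra | exact Hne].
    set (Q := pform u x1 x2) in *.
    set (K := p11 u * x1 + p12 u * x2).
    assert (HK : K ^ 2 <= p11 u * Q).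
    { unfold K, Q, pform. nra. }
    replace ((1 + s / alpha u * v1 u) * Q -
      (s / alpha u) ^ 2 * K ^ 2 / (u_rho u * (1 + s / alpha u * v1 u)))
      with ((e * e * u_rho u * Q - s * s * K ^ 2) / (alpha u * u_rho u * e)).
    2:{ clearbody Q K. unfold e. field. repeat split; try lra.
        intro H0. assert (e = 0) by (unfold e; lra). lra. }
    rewrite Hs. apply Rmult_lt_0_compat; [lra|]. apply Rdiv_lt_0_compat.
    + nra.
    + apply Rmult_lt_0_compat; [nra|lra].
Qed.

Theorem theorem2 (u : state) :
  Uad u -> Uad (wplus u) /\ Uad (wminus u).
Proof.
  intros H; split; apply main; auto; lra.
Qed.
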